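(* Let $(X,b)$ be a weighted graph, let $F=(F_x)_{x\in X}$ be a Hermitian vector bundle over $X$, let $\Phi$ be a connection on $F$, and let $W$ be a self-adjoint bundle endomorphism on $F$. Assume: (1) $(X,b)$ is locally finite; (2) all connected components of $(X,b)$ are infinite; (3) the quadratic form $q_{W_{\min}}$ is nonnegative or the quadratic form $q_{-W_{\max}-2\deg}$ is nonnegative. Then the magnetic Schrödinger operator $\mathcal M=\mathcal M_{b,\Phi,W}\colon\Gamma(X;F)\to\Gamma(X;F)$ is surjective.
   Context: A weighted graph is a pair $(X,b)$ with $X$ countable and $b\colon X\times X\to[0,\infty)$ satisfying $b(x,x)=0$, $b(x,y)=b(y,x)$, and $\deg(x):=\sum_{y}b(x,y)<\infty$ for all $x,y$. Write $x\sim y$ if $b(x,y)>0$; $(X,b)$ is locally finite if each $x$ has finitely many $y$ with $b(x,y)>0$. Connected components are the equivalence classes of the relation ''connected by a finite path $x_1\sim x_2\sim\dots\sim x_n$''. For $V\colon X\to\mathbb R$, the form $q_V\colon C_c(X)\to\mathbb R$ (finitely supported complex functions) is $q_V(f)=\frac12\sum_{x,y}b(x,y)|f(x)-f(y)|^2+\sum_x|f(x)|^2V(x)$; it is nonnegative if $q_V(f)\ge0$ for all $f\in C_c(X)$. A Hermitian vector bundle is a family $F=(F_x)_{x\in X}$ of finite-dimensional complex inner product spaces; $\Gamma(X;F)=\prod_x F_x$. A connection is a family of unitary maps $\Phi_{xy}\colon F_y\to F_x$ with $\Phi_{yx}=\Phi_{xy}^{-1}$. A self-adjoint bundle endomorphism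 is a family of self-adjoint linear maps $W(x)\colon F_x\to F_x$; $W_{\min}(x)$ and $W_{\max}(x)$ denote the smallest and largest eigenvalues of $W(x)$. For locally finite $(X,b)$, $\mathcal M f(x)=\sum_{y}b(x,y)(f(x)-\Phi_{xy}f(y))+W(x)f(x)$ for $f\in\Gamma(X;F)$. *)

(* Defs.v *)
From HB Require Import structures.
From mathcomp Require Import all_boot all_order all_algebra.
From mathcomp Require Import all_classical all_reals all_analysis.
From mathcomp Require Import complex.
From Stdlib Require Import Relations.
Import Order.TTheory GRing.Theory Num.Theory.

Set Implicit Arguments.
Unset Strict Implicit.
Unset Printing Implicit Defensive.

Local Open Scope ring_scope.
Local Open Scope classical_set_scope.

Section MagneticDefs.
Context {R : realType} {X : countType}.
Local Notation C := (R[i]).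

Definition weighted_graph (b : X -> X -> R) : Prop :=
  [/\ (forall x y, 0 <= b x y),
      (forall x, b x x = 0),
      (forall x y, b x y = b y x) &
      (forall x, (\esum_(y in [set: X]) (b x y)%:E < +oo)%E)].

Definition deg (b : X -> X -> R) (x : X) : R :=
  fine (\esum_(y in [set: X]) (b x y)%:E)%E.

Definition locally_finite (b : X -> X -> R) : Prop :=
  forall x, finite_set [set y | 0 < b x y].

Definition gconnected (b : X -> X -> R) : X -> X -> Prop :=
  clos_refl_trans X (fun x y => 0 < b x y).

Definition all_components_infinite (b : X -> X -> R) : Prop :=
  forall x, infinite_set [set y | gconnected b x y].

Definition finsupp (f : X -> C) : Prop := finite_set [set x | f x != 0].

(* q_V(f) = 1/2 sum_{x,y} b(x,y) |f(x)-f(y)|^2 + sum_x |f(x)|^2 V(x);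
   the first (nonnegative) sum is an unordered sum in [0,+oo], the second
   is a finite sum (f is finitely supported). *)
Definition qform (b : X -> X -> R) (V : X -> R) (f : X -> C) : \bar R :=
  ((2^-1)%:E * (\esum_(p in [set: X * X])
                  (b p.1 p.2 * (Normc.normc (f p.1 - f p.2)) ^+ 2)%:E)
   + (\sum_(x \in [set: X]) (Normc.normc (f x)) ^+ 2 * V x)%:E)%E.

Definition qform_nonneg (b : X -> X -> R) (V : X -> R) : Prop :=
  forall f : X -> C, finsupp f -> (0 <= qform b V f)%E.

(* Hermitian vector bundle: fibre F_x = C^(n x) with the standard inner
   product; adjoint = conjugate transpose. *)
Definition adjmx (m k : nat) (A : 'M[C]_(m, k)) : 'M[C]_(k, m) :=
  (map_mx (@conjc R) A)^T.

Definition connection (n : X -> nat) (Phi : forall x y, 'M[C]_(n x, n y)) : Prop :=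
  forall x y,
    [/\ Phi x y *m adjmx (Phi x y) = 1%:M,
        adjmx (Phi x y) *m Phi x y = 1%:M,
        Phi y x *m Phi x y = 1%:M &
        Phi x y *m Phi y x = 1%:M].

Definition selfadjoint_endo (n : X -> nat) (W : forall x, 'M[C]_(n x)) : Prop :=
  forall x, adjmx (W x) = W x.

(* smallest / largest eigenvalue of the self-adjoint W(x) (eigenvalues are real) *)
Definition Wmin (n : X -> nat) (W : forall x, 'M[C]_(n x)) (x : X) : R :=
  inf [set r : R | eigenvalue (W x) (r%:C)%C].
Definition Wmax (n : X -> nat) (W : forall x, 'M[C]_(n x)) (x : X) : R :=
  sup [set r : R | eigenvalue (W x) (r%:C)%C].

(* magnetic Schroedinger operator (for locally finite b the sum over y is a
   finite sum; \sum_(y \in A) is the finitely-supported sum of fsbigop) *)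
Definition magnetic (b : X -> X -> R) (n : X -> nat)
    (Phi : forall x y, 'M[C]_(n x, n y)) (W : forall x, 'M[C]_(n x))
    (f : forall x, 'cV[C]_(n x)) (x : X) : 'cV[C]_(n x) :=
  \sum_(y \in [set: X]) (((b x y)%:C)%C *: (f x - Phi x y *m f y)) + W x *m f x.

End MagneticDefs.

(* Main.v *)
Require Import Defs.
From HB Require Import structures.
From mathcomp Require Import all_boot all_order all_algebra.
From mathcomp Require Import all_classical all_reals all_analysis.
From mathcomp Require Import complex.
Import Order.TTheory GRing.Theory Num.Theory.
Local Open Scope ring_scope.
From mathcomp Require Import ring lra.
From Stdlib Require Import Relations.
Set Implicit Arguments. Unset Strict Implicit. Unset Printing Implicit Defensive.
Local Open Scope classical_set_scope.

Section Conv.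
Context {T : choiceType}.
Lemma fsT_seq (V : zmodType) (F : T -> V) (r : seq T) :
  uniq r -> (forall x, x \notin r -> F x = 0) ->
  \sum_(x \in [set: T]) F x = \sum_(x <- r) F x.
Proof.
move=> ur F0; rewrite (fsbig_seq _ _ ur); apply/esym/fsbig_widen => // x [_ /=].
by move=> xr; apply: F0; apply/negP.
Qed.

Lemma seq_widen (V : zmodType) (F : T -> V) (r1 r2 : seq T) :
  uniq r1 -> uniq r2 -> {subset r1 <= r2} -> (forall x, x \notin r1 -> F x = 0) ->
  \sum_(x <- r1) F x = \sum_(x <- r2) F x.
Proof.
move=> u1 u2 s12 F0; rewrite -(fsT_seq u1 F0) (fsT_seq u2) // => x xr2.
by apply: F0; apply: contra xr2; apply: s12.
Qed.

Lemma esumT_seq (R : realType) (a : T -> R) (r : seq T) :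
  (forall x, 0 <= a x) -> uniq r -> (forall x, x \notin r -> a x = 0) ->
  (\esum_(x in [set: T]) (a x)%:E = (\sum_(x <- r) a x)%:E)%E.
Proof.
move=> a0 ur F0.
have -> : (\esum_(x in [set: T]) (a x)%:E = \esum_(x in [set` r]) (a x)%:E)%E.
  rewrite [in RHS]esum_mkcond; congr esum; apply: funext => x.
  case: ifPn => // /negP xr; rewrite F0 //; apply/negP => xr'; apply: xr.
  by rewrite inE.
rewrite esum_fset; last 2 first.
- exact: finite_seq.
- by move=> i _; rewrite lee_fin.
by rewrite -fsbig_seq // sumEFin.
Qed.
End Conv.

Section Extend.
Variables (K : fieldType) (V : Type) (P : V -> Prop) (lc : V -> K -> V -> V)
  (T : V -> nat -> K) (phi : V -> K).
Hypotheses (Plc : forall v c w, P v -> P w -> P (lc v c w))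
  (Tlc : forall v c w j, P v -> P w -> T (lc v c w) j = T v j - c * T w j)
  (philc : forall v c w, P v -> P w -> phi (lc v c w) = phi v - c * phi w)
  (inj : forall v, P v -> (forall j, T v j = 0) -> phi v = 0).

Definition Cons k (s : nat -> K) := forall v, P v -> (forall j, (k <= j)%N -> T v j = 0) ->
  phi v = \sum_(j < k) T v j * s j.

Definition step k (s : nat -> K) : K :=
  match pselect (exists v, [/\ P v, (forall j, (k < j)%N -> T v j = 0) & T v k != 0]) with
  | left H => let v := projT1 (cid H) in (phi v - \sum_(j < k) T v j * s j) / T v k
  | right _ => 0 end.

Fixpoint pre k : nat -> K := match k with 0 => fun _ => 0
  | k'.+1 => fun j => if j == k' then step k' (pre k') else pre k' j end.

Definition aseq j := pre j.+1 j.

Lemma pre_stable k j : (j < k)%N -> pre k j = aseq j.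
Proof.
elim: k => // k IH; rewrite ltnS leq_eqVlt => /orP[/eqP ->|jk] /=.
  by rewrite /aseq /= eqxx.
by rewrite (ltn_eqF jk) IH.
Qed.

Lemma Cons_pre k : Cons k (pre k).
Proof.
elim: k => [|k IH] v Pv Hv.
  by rewrite big_ord0; apply: inj => // j; apply: Hv.
rewrite big_ord_recr /=.
have -> : \sum_(i < k) T v i * (if (i : nat) == k then step k (pre k) else pre k i)
   = \sum_(i < k) T v i * pre k i.
  by apply: eq_bigr => i _; rewrite (ltn_eqF (ltn_ord i)).
rewrite eqxx.
have [Tk0|Tk0] := eqVneq (T v k) 0.
  rewrite Tk0 mul0r addr0; apply: IH => // j; rewrite leq_eqVlt => /orP[/eqP <-//|].
  exact: Hv.
rewrite /step; case: pselect => [H|H]; last first.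
  by exfalso; apply: H; exists v; split.
case: (cid H) => v0 [Pv0 Hv0 T0k] /=.
pose c := T v k / T v0 k.
have Pv' := Plc c Pv Pv0.
have := IH _ Pv'; rewrite philc //.
have e1 : \sum_(j < k) T (lc v c v0) j * pre k j
    = \sum_(j < k) T v j * pre k j - c * \sum_(j < k) T v0 j * pre k j.
  by rewrite mulr_sumr -sumrB; apply: eq_bigr => j _; rewrite Tlc // mulrBl mulrA.
rewrite e1 => /(_ _) E.
have {E} E : phi v - c * phi v0 =
   \sum_(j < k) T v j * pre k j - c * \sum_(j < k) T v0 j * pre k j.
  apply: E => j; rewrite leq_eqVlt => /orP[/eqP <-|kj].
    by rewrite Tlc // /c divfK // subrr.
  by rewrite Tlc // Hv // Hv0 // mulr0 subr0.
move: E; rewrite /c => E.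
have -> : phi v = (phi v - T v k / T v0 k * phi v0) + T v k / T v0 k * phi v0 by ring.
rewrite E; field; exact: T0k.
Qed.

Lemma extend : exists a : nat -> K, forall v N, P v -> (forall j, (N <= j)%N -> T v j = 0) ->
  phi v = \sum_(j < N) T v j * a j.
Proof.
exists aseq => v N Pv Hv; rewrite (Cons_pre Pv Hv).
by apply: eq_bigr => j _; rewrite pre_stable.
Qed.
End Extend.

Section Vec.
Variable R : realType.
Local Notation C := (R[i]).
Local Notation Re := (@complex.Re R).
Local Notation Im := (@complex.Im R).

Lemma ReD (a c : C) : Re (a + c) = Re a + Re c. Proof. by case: a; case: c. Qed.
Lemma ReB (a c : C) : Re (a - c) = Re a - Re c. Proof. by case: a; case: c. Qed.
Lemma ReZ (r : R) (a : C) : Re ((r%:C)%C * a) = r * Re a.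
Proof. by case: a => a1 a2 /=; ring. Qed.
Lemma Re_sum (I : Type) (r : seq I) (F : I -> C) :
  Re (\sum_(i <- r) F i) = \sum_(i <- r) Re (F i).
Proof. by elim: r => [|x r IH]; rewrite ?big_nil // !big_cons ReD IH. Qed.

Definition hd m (v w : 'cV[C]_m) : R := Re ((adjmx v *m w) 0 0).
Definition nrm2 m (v : 'cV[C]_m) := hd v v.

Lemma hdE m (v w : 'cV[C]_m) :
  hd v w = \sum_k (Re (v k 0) * Re (w k 0) + Im (v k 0) * Im (w k 0)).
Proof.
rewrite /hd mxE Re_sum; apply: eq_bigr => k _; rewrite !mxE.
by case: (v k 0) => a1 a2; case: (w k 0) => c1 c2 /=; ring.
Qed.

Lemma nrm2E m (v : 'cV[C]_m) : nrm2 v = \sum_k (Re (v k 0) ^+ 2 + Im (v k 0) ^+ 2).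
Proof. by rewrite /nrm2 hdE; apply: eq_bigr => k _; rewrite !expr2. Qed.

Lemma nrm2_ge0 m (v : 'cV[C]_m) : 0 <= nrm2 v.
Proof. by rewrite nrm2E sumr_ge0 // => k _; rewrite addr_ge0 ?sqr_ge0. Qed.

Lemma nrm2_eq0 m (v : 'cV[C]_m) : nrm2 v = 0 -> v = 0.
Proof.
rewrite nrm2E => /eqP; rewrite psumr_eq0 => [/allP H|k _]; last by rewrite addr_ge0 ?sqr_ge0.
apply/matrixP => k l; rewrite ord1 mxE.
have := H k (mem_index_enum _); rewrite paddr_eq0 ?sqr_ge0 // !sqrf_eq0.
by case: (v k 0) => a1 a2 /= /andP[/eqP -> /eqP ->].
Qed.

Lemma hdDr m (v w1 w2 : 'cV[C]_m) : hd v (w1 + w2) = hd v w1 + hd v w2.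
Proof. by rewrite /hd mulmxDr mxE ReD. Qed.
Lemma hdBr m (v w1 w2 : 'cV[C]_m) : hd v (w1 - w2) = hd v w1 - hd v w2.
Proof. by rewrite /hd mulmxBr mxE ReD; congr (_ + _); rewrite mxE; case: (_ 0 0). Qed.
Lemma hdZr m (r : R) (v w : 'cV[C]_m) : hd v ((r%:C)%C *: w) = r * hd v w.
Proof. by rewrite /hd -scalemxAr mxE ReZ. Qed.
Lemma hd_sumr m (I : Type) (s : seq I) (v : 'cV[C]_m) (F : I -> 'cV[C]_m) :
  hd v (\sum_(i <- s) F i) = \sum_(i <- s) hd v (F i).
Proof.
elim: s => [|x s IH]; last by rewrite !big_cons hdDr IH.
by rewrite !big_nil /hd mulmx0 mxE.
Qed.

Lemma disc (P S Q : R) : 0 <= P -> (forall t, 0 <= P * t ^+ 2 - 2 * S * t + Q) ->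
  S ^+ 2 <= P * Q.
Proof.
move=> P0 H; have [P00|Pn0] := eqVneq P 0.
  rewrite P00 in H *.
  have [S0|Sn0] := eqVneq S 0; first by rewrite S0 expr0n /= mul0r.
  have := H ((Q + 1) / (2 * S)).
  have -> : 0 * ((Q + 1) / (2 * S)) ^+ 2 - 2 * S * ((Q + 1) / (2 * S)) + Q = -1.
    by field; rewrite Sn0.
  by rewrite oppr_ge0 ler10.
have Pp : 0 < P by rewrite lt0r Pn0.
have := H (S / P).
have -> : P * (S / P) ^+ 2 - 2 * S * (S / P) + Q = Q - S ^+ 2 / P by field.
by rewrite subr_ge0 ler_pdivrMr // mulrC.
Qed.

Lemma CS2 m (v w : 'cV[C]_m) : hd v w ^+ 2 <= nrm2 v * nrm2 w.
Proof.
apply: disc; first exact: nrm2_ge0.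
move=> t; rewrite nrm2E hdE nrm2E.
rewrite mulr_suml mulr_sumr mulr_suml -sumrB -big_split /=.
apply: sumr_ge0 => k _.
set a := Re (v k 0); set c := Im (v k 0); set d := Re (w k 0); set e := Im (w k 0).
have -> : (a ^+ 2 + c ^+ 2) * t ^+ 2 - 2 * (a * d + c * e) * t + (d ^+ 2 + e ^+ 2)
  = (t * a - d) ^+ 2 + (t * c - e) ^+ 2 by ring.
by rewrite addr_ge0 ?sqr_ge0.
Qed.

Lemma CS m (v w : 'cV[C]_m) : `|hd v w| <= Num.sqrt (nrm2 v) * Num.sqrt (nrm2 w).
Proof.
rewrite -sqrtrM ?nrm2_ge0 // -sqrtr_sqr; apply: ler_wsqrtr; exact: CS2.
Qed.

Lemma adjmxM m p q (A : 'M[C]_(m, p)) (B : 'M[C]_(p, q)) :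
  adjmx (A *m B) = adjmx B *m adjmx A.
Proof. by rewrite /adjmx map_mxM trmx_mul. Qed.

Lemma nrm2_unit m p (P : 'M[C]_(p, m)) v : adjmx P *m P = 1%:M -> nrm2 (P *m v) = nrm2 v.
Proof.
move=> H; rewrite /nrm2 /hd adjmxM -mulmxA (mulmxA (adjmx P)) H mul1mx //.
Qed.

Definition eigset m (A : 'M[C]_m) := [set r : R | eigenvalue A ((r%:C)%C)].

Lemma adj_tC m p (A : 'M[C]_(m, p)) : (A ^t* )%sesqui = adjmx A.
Proof. by rewrite /adjmx map_trmx. Qed.

Lemma ReconjZ (r : R) (a : C) : Re (conjc a * (r%:C)%C * a) = r * (Re a ^+ 2 + Im a ^+ 2).
Proof. by case: a => a1 a2 /=; ring. Qed.

Lemma rayleigh m (A : 'M[C]_m) : adjmx A = A -> forall v : 'cV[C]_m,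
  inf (eigset A) * nrm2 v <= hd v (A *m v) /\ hd v (A *m v) <= sup (eigset A) * nrm2 v.
Proof.
move=> hA v.
have normA : A \is normalmx by apply/normalmxP; rewrite adj_tC hA.
have herm : A \is hermsymmx by apply/is_hermitianmxP; rewrite expr0 scale1r adj_tC hA.
set P := spectralmx A; set d := spectral_diag A.
have PU : P \is unitarymx := spectral_unitarymx A.
move/orthomx_spectralP: normA; rewrite -/P -/d invmx_unitary // => AE.
have dreal := hermitian_spectral_diag_real herm; rewrite -/d in dreal.
set r := fun k => Re (d 0 k).
have dR k : d 0 k = ((r k)%:C)%C by rewrite /r RRe_real //; apply: (mxOverP dreal).
have PPt : P *m (P ^t* )%sesqui = 1%:M by apply/unitarymxP.
have PtP : (P ^t* )%sesqui *m P = 1%:M.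
  by have := mulmxKtV (1%:M : 'M[C]_m) PU (erefl _); rewrite mul1mx.
have eig k : eigenvalue A ((r k)%:C)%C.
  apply/eigenvalueP; exists (row k P).
    rewrite AE !mulmxA -row_mul PPt -row_mul mul1mx row_diag_mx -scalemxAl -rowE.
    by rewrite dR.
  apply/eqP => H0; have := congr1 (mulmx^~ (P ^t* )%sesqui) H0.
  rewrite -row_mul PPt mul0mx => /matrixP/(_ 0 k); rewrite !mxE eqxx /=.
  by move/eqP; rewrite oner_eq0.
have bnd : forall x, eigset A x -> exists k, x = r k.
  move=> x /eigenvalueP [w wA wn0].
  set z := w *m (P ^t* )%sesqui.
  have zD : z *m diag_mx d = (x%:C)%C *: z.
    have := congr1 (mulmx^~ (P ^t* )%sesqui) wA.
    by rewrite AE !mulmxA -(mulmxA _ P) PPt mulmx1 -scalemxAl.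
  have zn0 : z != 0.
    apply: contraNneq wn0 => z0.
    have <- : z *m P = w by rewrite /z -mulmxA PtP mulmx1.
    by rewrite z0 mul0mx.
  have [i [k zk]] := matrix0Pn _ zn0; rewrite ord1 in zk.
  clearbody z.
  exists k; have := congr1 (fun M : 'rV[C]_m => M 0 k) zD; rewrite mul_mx_diag !mxE.
  rewrite [z 0 k * _]mulrC => H; have E := mulIf zk H.
  by rewrite /r E.
have lb : has_lbound (eigset A).
  exists (- \sum_k `|r k|) => x /bnd [k ->].
  rewrite lerNl; apply: le_trans (_ : `|r k| <= _).
    by rewrite -normrN ler_norm.
  rewrite (bigD1 k) //= lerDl sumr_ge0 // => j _; exact: normr_ge0.
have ub : has_ubound (eigset A).
  exists (\sum_k `|r k|) => x /bnd [k ->].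
  apply: le_trans (ler_norm _) _.
  rewrite (bigD1 k) //= lerDl sumr_ge0 // => j _; exact: normr_ge0.
set c := P *m v.
have nc : nrm2 v = nrm2 c by rewrite /c nrm2_unit // -adj_tC.
have hq : hd v (A *m v) = \sum_k r k * (Re (c k 0) ^+ 2 + Im (c k 0) ^+ 2).
  rewrite /hd AE !mulmxA.
  have -> : adjmx v *m (P ^t* )%sesqui = adjmx c by rewrite /c adjmxM adj_tC.
  rewrite -mulmxA mxE Re_sum; apply: eq_bigr => k _.
  by rewrite mul_mx_diag !mxE dR ReconjZ.
rewrite hq nc nrm2E mulr_sumr [X in _ /\ _ <= X]mulr_sumr; split; apply: ler_sum => k _;
  apply: ler_wpM2r; rewrite ?addr_ge0 ?sqr_ge0 //.
- by apply: ge_inf => //; exact: eig.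
- by apply: ub_le_sup => //; exact: eig.
Qed.
End Vec.

Section Main.
Variables (R : realType) (X : countType) (b : X -> X -> R) (n : X -> nat)
  (Phi : forall x y : X, 'M[R[i]]_(n x, n y)) (W : forall x : X, 'M[R[i]]_(n x)).
Hypotheses (wg : weighted_graph b) (lf : locally_finite b).
Local Notation C := (R[i]).

Lemma b_ge0 x y : 0 <= b x y. Proof. by case: wg. Qed.
Lemma b_diag x : b x x = 0. Proof. by case: wg. Qed.
Lemma b_sym x y : b x y = b y x. Proof. by case: wg. Qed.

Definition nbs (x : X) := cid (proj1 (finite_seqP _) (lf x)).
Definition nb (x : X) : seq X := undup (projT1 (nbs x)).

Lemma nbP x y : (y \in nb x) = (0 < b x y).
Proof.
rewrite /nb mem_undup; case: (nbs x) => s /= E.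
apply/idP/idP => H.
  by have : [set` s] y by []; rewrite -E.
by have : [set y | 0 < b x y] y by []; rewrite E.
Qed.

Lemma nb_uniq x : uniq (nb x). Proof. exact: undup_uniq. Qed.
Lemma nb0 x y : y \notin nb x -> b x y = 0.
Proof. by rewrite nbP => H; apply/eqP; rewrite eq_le b_ge0 andbT leNgt. Qed.
Lemma nb_sym x y : (y \in nb x) = (x \in nb y).
Proof. by rewrite !nbP b_sym. Qed.
Lemma nb_irr x : x \notin nb x.
Proof. by rewrite nbP b_diag ltxx. Qed.

Definition ext (s : seq X) := undup (s ++ flatten (map nb s)).
Lemma ext_uniq s : uniq (ext s). Proof. exact: undup_uniq. Qed.
Lemma ext_l s x : x \in s -> x \in ext s.
Proof. by move=> xs; rewrite mem_undup mem_cat xs. Qed.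
Lemma ext_nb s x y : x \in s -> y \in nb x -> y \in ext s.
Proof.
move=> xs ynb; rewrite mem_undup mem_cat; apply/orP; right.
by apply/flattenP; exists (nb x) => //; apply/mapP; exists x.
Qed.
Lemma extP s y : y \in ext s -> y \in s \/ exists2 x, x \in s & y \in nb x.
Proof.
rewrite mem_undup mem_cat => /orP[->|/flattenP[l /mapP[x xs ->] ynb]]; first by left.
by right; exists x.
Qed.

Definition Sec := forall x, 'cV[C]_(n x).
Definition Psi y z : 'M[C]_(n y, n z) := (Phi z y)^T.
Definition Mt (u : Sec) y : 'cV[C]_(n y) :=
  \sum_(z <- nb y) ((b y z)%:C)%C *: (u y - Psi y z *m u z) + (W y)^T *m u y.

Definition lc (v : Sec) (c : C) (w : Sec) : Sec := fun x => v x - c *: w x.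

Lemma Mt_lc v c w y : Mt (lc v c w) y = Mt v y - c *: Mt w y.
Proof.
rewrite /Mt /lc scalerDr scaler_sumr opprD addrACA -sumrB; congr (_ + _).
  apply: eq_bigr => z _.
  rewrite mulmxBr -scalemxAr [in RHS]scalerA mulrC -[in RHS]scalerA -scalerBr.
  congr (_ *: _); rewrite scalerBr.
  set a := v y; set d := w y; set e := Psi y z *m v z; set f := Psi y z *m w z.
  by rewrite !opprB addrACA [in RHS]addrACA; congr (_ + _); rewrite addrC.

by rewrite mulmxBr scalemxAr.
Qed.

Definition fsup (v : Sec) (s : seq X) := forall x, x \notin s -> v x = 0.
Definition Pf (v : Sec) := exists s, fsup v s.

Lemma Mt_zero v y : v y = 0 -> (forall z, z \in nb y -> v z = 0) -> Mt v y = 0.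
Proof.
rewrite /Mt => vy vz; rewrite vy mulmx0 addr0 big_seq big1 // => z zn.
by rewrite vz // mulmx0 subrr scaler0.
Qed.

Lemma Mt_fsup v s : fsup v s -> fsup (Mt v) (ext s).
Proof.
move=> H y ye; apply: Mt_zero.
  by apply: H; apply: contra ye; exact: ext_l.
move=> z zn; apply: H; apply: contra ye => zs; apply: (ext_nb zs).
by rewrite nb_sym.
Qed.

Definition B := {x : X & 'I_(n x)}.
Definition tg x (k : 'I_(n x)) : B := Tagged (fun x => 'I_(n x)) k.
Definition coord (u : Sec) (j : nat) : C :=
  if @pickle_inv B j is Some p then u (tag p) (tagged p) 0 else 0.
Definition L (s : seq X) : seq B :=
  flatten [seq [seq tg k | k <- index_enum 'I_(n x)] | x <- s].
Definition Kof s := (\max_(p <- L s) pickle p).+1.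

Lemma tg_inj x : injective (@tg x).
Proof. by move=> k1 k2 /eqP; rewrite eq_Tagged => /eqP. Qed.

Lemma memL s p : (p \in L s) = (tag p \in s).
Proof.
apply/flattenP/idP => [[l /mapP[x xs ->] /mapP[k _ ->]] //|ps].
exists [seq tg k | k <- index_enum 'I_(n (tag p))]; first by apply/mapP; exists (tag p).
by apply/mapP; exists (tagged p); rewrite ?mem_index_enum //; case: p {ps}.
Qed.

Lemma uniqL s : uniq s -> uniq (L s).
Proof.
elim: s => //= x s IH /andP[xs us]; rewrite cat_uniq IH // andbT.
rewrite (map_inj_uniq (@tg_inj x)) ?index_enum_uniq //=.
apply/hasPn => p; rewrite memL => ps; apply/mapP => -[k _ pk].
by move: ps; rewrite pk /= (negbTE xs).
Qed.

Lemma pickle_L s p : p \in L s -> (pickle p < Kof s)%N.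
Proof. by move=> pL; rewrite ltnS; apply: (@leq_bigmax_seq _ _ xpredT). Qed.

Lemma coord_big u s : fsup u s -> forall j, (Kof s <= j)%N -> coord u j = 0.
Proof.
move=> su j Kj; rewrite /coord; case E: pickle_inv => [p|] //.
have pj : pickle p = j by have := @pickle_invK B j; rewrite E.
have [ps|ps] := boolP (tag p \in s).
  by have := pickle_L (_ : p \in L s); rewrite memL pj => /(_ ps); rewrite ltnNge Kj.
by rewrite su // mxE.
Qed.

Lemma reindex u s (a : nat -> C) N : uniq s -> fsup u s -> (Kof s <= N)%N ->
  \sum_(j < N) coord u j * a j =
  \sum_(x <- s) \sum_(k < n x) u x k 0 * a (pickle (tg k)).
Proof.
move=> us su KN.
rewrite -(big_mkord xpredT (fun j => coord u j * a j)).
rewrite (bigID (fun j => j \in map pickle (L s))) /= [X in _ + X]big1 ?addr0; last first.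
  move=> j jL; rewrite /coord; case E: pickle_inv => [p|]; last by rewrite mul0r.
  have pj : pickle p = j by have := @pickle_invK B j; rewrite E.
  have [ps|ps] := boolP (tag p \in s).
    by exfalso; move/negP: jL; apply; apply/mapP; exists p; rewrite ?memL.
  by rewrite su // mxE mul0r.
rewrite -big_filter (perm_big (map pickle (L s))); last first.
  apply: uniq_perm; first by rewrite filter_uniq // iota_uniq.
    by rewrite (map_inj_uniq (pcan_inj (@pickleK_inv B))) uniqL.
  move=> j; rewrite mem_filter; apply/andP/idP => [[]//|jL]; split => //.
  case/mapP: jL => p pL ->; rewrite mem_index_iota /=.
  exact: leq_trans (pickle_L pL) KN.
rewrite big_map big_flatten big_map; apply: eq_bigr => x _.
rewrite big_map; apply: eq_bigr => k _.
by rewrite /coord pickleK_inv.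
Qed.

Lemma fsup_sub v s s' : fsup v s -> {subset s <= s'} -> fsup v s'.
Proof. by move=> H ss' x xs'; apply: H; apply: contra xs'; apply: ss'. Qed.

Lemma Pf_lc v c w : Pf v -> Pf w -> Pf (lc v c w).
Proof.
move=> [s1 H1] [s2 H2]; exists (s1 ++ s2) => x; rewrite mem_cat negb_or => /andP[x1 x2].
by rewrite /lc H1 // H2 // scaler0 subr0.
Qed.

Definition phi (g : Sec) (v : Sec) : C :=
  \sum_(x \in [set: X]) \sum_(k < n x) v x k 0 * g x k 0.

Lemma phi_seq g v s : uniq s -> fsup v s ->
  phi g v = \sum_(x <- s) \sum_(k < n x) v x k 0 * g x k 0.
Proof.
move=> us vs; rewrite /phi (fsT_seq us) // => x xs.
by rewrite vs // big1 // => k _; rewrite mxE mul0r.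
Qed.

Lemma phi_lc g v c w : Pf v -> Pf w -> phi g (lc v c w) = phi g v - c * phi g w.
Proof.
move=> [s1 H1] [s2 H2]; set s := undup (s1 ++ s2).
have us : uniq s by exact: undup_uniq.
have H1' : fsup v s by apply: fsup_sub H1 _ => x; rewrite mem_undup mem_cat => ->.
have H2' : fsup w s by apply: fsup_sub H2 _ => x; rewrite mem_undup mem_cat orbC => ->.
have H3 : fsup (lc v c w) s by move=> x xs; rewrite /lc H1' // H2' // scaler0 subr0.
rewrite !(phi_seq g us) // mulr_sumr -sumrB; apply: eq_bigr => x _.
rewrite mulr_sumr -sumrB; apply: eq_bigr => k _.
by rewrite /lc !mxE mulrBl mulrA.
Qed.

Definition delta x (i : 'I_(n x)) : Sec := fun y => \col_(k < n y) ((tg k == tg i)%:R).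
Arguments delta : clear implicits.

Lemma delta_ne x i y : y != x -> delta x i y = 0.
Proof.
move=> yx; apply/matrixP => k l; rewrite !mxE.
case: eqP => // /(congr1 (@tag _ _)) /= yx'; by rewrite yx' eqxx in yx.
Qed.

Lemma delta_fsup x i : fsup (delta x i) [:: x].
Proof. by move=> y; rewrite inE => yx; apply: delta_ne. Qed.

Lemma delta_same x i k : delta x i x k 0 = (k == i)%:R.
Proof. by rewrite mxE eq_Tagged. Qed.

Lemma phi_delta g x i : phi g (delta x i) = g x i 0.
Proof.
rewrite (phi_seq g (_ : uniq [:: x]) (delta_fsup i)) // big_cons big_nil addr0.
rewrite (bigD1 i) //= delta_same eqxx mul1r big1 ?addr0 // => k ki.
by rewrite delta_same (negbTE ki) mul0r.
Qed.

Definition dot m (v w : 'cV[C]_m) : C := (v^T *m w) 0 0.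
Lemma dotE m (v w : 'cV[C]_m) : dot v w = \sum_k v k 0 * w k 0.
Proof. by rewrite /dot mxE; apply: eq_bigr => k _; rewrite mxE. Qed.
Lemma dot_tr m p (A : 'M[C]_(p, m)) v w : dot (A^T *m v) w = dot v (A *m w).
Proof. by rewrite /dot trmx_mul trmxK mulmxA. Qed.
Lemma dotDl m (v1 v2 w : 'cV[C]_m) : dot (v1 + v2) w = dot v1 w + dot v2 w.
Proof. by rewrite !dotE -big_split; apply: eq_bigr => k _; rewrite mxE mulrDl. Qed.
Lemma dotBl m (v1 v2 w : 'cV[C]_m) : dot (v1 - v2) w = dot v1 w - dot v2 w.
Proof. by rewrite !dotE -sumrB; apply: eq_bigr => k _; rewrite !mxE mulrBl. Qed.
Lemma dotZl m c (v w : 'cV[C]_m) : dot (c *: v) w = c * dot v w.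
Proof. by rewrite !dotE mulr_sumr; apply: eq_bigr => k _; rewrite mxE mulrA. Qed.
Lemma dot_suml m (I : Type) (r : seq I) (F : I -> 'cV[C]_m) w :
  dot (\sum_(z <- r) F z) w = \sum_(z <- r) dot (F z) w.
Proof.
elim: r => [|z r IH]; first by rewrite !big_nil dotE big1 // => k _; rewrite mxE mul0r.
by rewrite !big_cons dotDl IH.
Qed.
Lemma dot_delta_same x i w : dot (delta x i x) w = w i 0.
Proof.
rewrite dotE (bigD1 i) //= delta_same eqxx mul1r big1 ?addr0 // => k ki.
by rewrite delta_same (negbTE ki) mul0r.
Qed.
Lemma dot_delta_ne x i y w : y != x -> dot (delta x i y) w = 0.
Proof. by move=> yx; rewrite delta_ne // dotE big1 // => k _; rewrite mxE mul0r. Qed.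

Lemma dot_Mt u y w : dot (Mt u y) w =
  \sum_(z <- nb y) ((b y z)%:C)%C * (dot (u y) w - dot (u z) (Phi z y *m w))
  + dot (u y) (W y *m w).
Proof.
rewrite /Mt dotDl dot_tr dot_suml; congr (_ + _); apply: eq_bigr => z _.
by rewrite dotZl dotBl /Psi dot_tr.
Qed.

Lemma realC0 : ((0 : R)%:C)%C = 0 :> C. Proof. by []. Qed.

Lemma adj_delta (f : Sec) x i :
  \sum_(y <- x :: nb x) dot (Mt (delta x i) y) (f y) = (magnetic b Phi W f x) i 0.
Proof.
rewrite big_cons dot_Mt dot_delta_same dot_delta_same.
have E1 : \sum_(z <- nb x) ((b x z)%:C)%C *
      (f x i 0 - dot (delta x i z) (Phi z x *m f x)) =
    \sum_(z <- nb x) ((b x z)%:C)%C * f x i 0.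
  rewrite big_seq [RHS]big_seq; apply: eq_bigr => z zn.
  rewrite dot_delta_ne ?subr0 //; apply: contraNneq (nb_irr x) => zx; rewrite -{1}zx; assumption.
rewrite E1.
have E2 : \sum_(y <- nb x) dot (Mt (delta x i) y) (f y) =
    \sum_(y <- nb x) ((b x y)%:C)%C * - (Phi x y *m f y) i 0.
  rewrite big_seq [RHS]big_seq; apply: eq_bigr => y yn.
  have yx : y != x by apply: contraNneq (nb_irr x) => zx; rewrite -{1}zx; assumption.
  rewrite dot_Mt (dot_delta_ne _ _ yx) (dot_delta_ne _ _ yx) addr0.
  have xy : x \in nb y by rewrite -nb_sym.
  rewrite (bigD1_seq x xy (nb_uniq y)) /= dot_delta_same sub0r b_sym big1 ?addr0 //.
  by move=> z zx; rewrite dot_delta_ne // subrr mulr0.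
rewrite E2 /magnetic (fsT_seq (nb_uniq x)); last first.
  by move=> y yn; rewrite nb0 // realC0 scale0r.
rewrite [in RHS]mxE summxE addrAC -big_split /=; congr (_ + _).
by apply: eq_bigr => y _; rewrite [in RHS]mxE -mulrDr [in RHS]mxE [in RHS]mxE.
Qed.

Lemma dot0l m (w : 'cV[C]_m) : dot 0 w = 0.
Proof. by rewrite dotE big1 // => k _; rewrite mxE mul0r. Qed.

Lemma surj_of_inj (g : Sec) :
  (forall u, Pf u -> (forall y, Mt u y = 0) -> forall x, u x = 0) ->
  exists f : Sec, forall x, magnetic b Phi W f x = g x.
Proof.
move=> inj.
have Tlc : forall v c w j, Pf v -> Pf w ->
    coord (Mt (lc v c w)) j = coord (Mt v) j - c * coord (Mt w) j.
  move=> v c w j _ _; rewrite /coord; case: pickle_inv => [p|]; last by rewrite mulr0 subr0.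
  by rewrite Mt_lc !mxE.
have Hinj : forall v, Pf v -> (forall j, coord (Mt v) j = 0) -> phi g v = 0.
  move=> v Pv H.
  have Mv : forall y, Mt v y = 0.
    move=> y; apply/matrixP => k l; rewrite ord1.
    by have := H (pickle (tg k)); rewrite /coord pickleK_inv /= => ->; rewrite mxE.
  have v0 := inj v Pv Mv.
  by rewrite (@phi_seq g v [::]) ?big_nil // => x _; rewrite v0.
have [a Ha] := @extend C Sec Pf lc (fun v => coord (Mt v)) (phi g) Pf_lc
  Tlc (fun v c w Pv Pw => phi_lc g c Pv Pw) Hinj.
exists (fun x => \col_(k < n x) a (pickle (tg k))) => x.
apply/matrixP => i l; rewrite ord1 -adj_delta -phi_delta.
have Pd : Pf (delta x i) by exists [:: x]; exact: delta_fsup.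
rewrite (Ha _ (Kof (ext [:: x])) Pd (coord_big (Mt_fsup (delta_fsup i)))).
rewrite (reindex _ (ext_uniq _) (Mt_fsup (delta_fsup i)) (leqnn _)).
have sub : {subset x :: nb x <= ext [:: x]}.
  move=> y; rewrite inE => /orP[/eqP ->|yn]; first by apply: ext_l; rewrite inE.
  by apply: (ext_nb (_ : x \in [:: x])) => //; rewrite inE.
have u1 : uniq (x :: nb x) by rewrite /= nb_irr nb_uniq.
rewrite -(seq_widen u1 (ext_uniq _) sub); last first.
  move=> y; rewrite inE negb_or => /andP[yx yn].
  rewrite Mt_zero ?delta_ne; first by rewrite big1 // => k _; rewrite mxE mul0r.
  all: try done.  move=> z zn; apply: delta_ne.
  by apply: contraNneq yn => zx; rewrite nb_sym -zx.
apply: eq_bigr => y _; rewrite dotE; apply: eq_bigr => k _; by congr (_ * _); rewrite mxE.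
Qed.

Definition S2 (r : seq X) (F : X -> X -> R) := \sum_(y <- r) \sum_(z <- r) b y z * F y z.
Lemma eq_S2 r F G : (forall y z, F y z = G y z) -> S2 r F = S2 r G.
Proof. by move=> H; apply: eq_bigr => y _; apply: eq_bigr => z _; rewrite H. Qed.
Lemma S2D r F G : S2 r (fun y z => F y z + G y z) = S2 r F + S2 r G.
Proof.
rewrite /S2 -big_split; apply: eq_bigr => y _; rewrite -big_split.
by apply: eq_bigr => z _; rewrite mulrDr.
Qed.
Lemma S2Z r c F : S2 r (fun y z => c * F y z) = c * S2 r F.
Proof.
rewrite /S2 mulr_sumr; apply: eq_bigr => y _; rewrite mulr_sumr.
by apply: eq_bigr => z _; rewrite mulrCA.
Qed.
Lemma S2N r F : S2 r (fun y z => - F y z) = - S2 r F.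
Proof. by rewrite -mulN1r -S2Z; apply: eq_S2 => y z; rewrite mulN1r. Qed.
Lemma S2_swap r F : S2 r (fun y z => F z y) = S2 r F.
Proof.
rewrite /S2 exchange_big; apply: eq_bigr => y _; apply: eq_bigr => z _.
by rewrite b_sym.
Qed.

Definition qf r (V : X -> R) (h : X -> R) :=
  2^-1 * S2 r (fun y z => (h y - h z) ^+ 2) + \sum_(y <- r) h y ^+ 2 * V y.

Lemma S2_sq r h : S2 r (fun y z => (h y - h z) ^+ 2) =
  2 * (S2 r (fun y z => h y ^+ 2) - S2 r (fun y z => h y * h z)).
Proof.
rewrite (@eq_S2 _ _ (fun y z => (h y ^+ 2 - h y * h z) + (h z ^+ 2 - h z * h y))); last first.
  by move=> y z; ring.
rewrite S2D (S2_swap r (fun y z => h y ^+ 2 - h y * h z)).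
by rewrite S2D S2N; ring.
Qed.

Lemma qfE r V h : qf r V h =
  S2 r (fun y z => h y ^+ 2) - S2 r (fun y z => h y * h z) + \sum_(y <- r) h y ^+ 2 * V y.
Proof. by rewrite /qf S2_sq mulrA mulVf ?mul1r // pnatr_eq0. Qed.

Lemma normcR2 (c : R) : Normc.normc ((c%:C)%C) ^+ 2 = c ^+ 2.
Proof. by rewrite /Normc.normc /= expr0n addr0 sqr_sqrtr // sqr_ge0. Qed.

Lemma qform_qf V (h : X -> R) r0 : qform_nonneg b V -> (forall x, x \notin r0 -> h x = 0) ->
  0 <= qf (ext r0) V h.
Proof.
move=> hq h0.
have fs : finsupp (fun x => (h x)%:C%C).
  apply: (sub_finite_set _ (finite_seq r0)) => x /= hx; apply/negPn/negP => xr.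
  by move: hx; rewrite h0 // => /eqP; apply.
have := hq _ fs; rewrite /qform.
have ur := ext_uniq r0.
rewrite (esumT_seq (r := [seq (y, z) | y <- ext r0, z <- ext r0])); last 3 first.
- by move=> q; rewrite mulr_ge0 ?b_ge0 // sqr_ge0.
- by rewrite allpairs_uniq // => -[? ?] [? ?] _ _ [-> ->].
- move=> [y z] yz /=.
  have [bz|bn] := eqVneq (b y z) 0; first by rewrite bz mul0r.
  have [hyz|hn] := eqVneq (h y) (h z).
    by rewrite hyz !subrr !expr0n /= addr0 sqrtr0 expr0n /= mulr0.
  exfalso; move/negP: yz; apply.
  have bp : 0 < b y z by rewrite lt0r bn b_ge0.
  have [hy|hy] := eqVneq (h y) 0.
    have zr : z \in r0 by apply/negPn/negP => zr; move: hn; rewrite hy h0 // eqxx.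
    apply: allpairs_f; last exact: ext_l.
    by apply: (ext_nb zr); rewrite nbP b_sym.
  have yr : y \in r0 by apply/negPn/negP => yr; move: hy; rewrite h0 // eqxx.
  apply: allpairs_f; first exact: ext_l.
  by apply: (ext_nb yr); rewrite nbP.
rewrite (fsT_seq ur); last first.
  move=> x xr; rewrite h0 ?(normcR2 0) ?expr0n ?mul0r //.
  by apply: contra xr; apply: ext_l.
rewrite big_allpairs -EFinM -EFinD lee_fin /qf /S2 /=.
congr (_ <= _ * _ + _).
  apply: eq_bigr => y _; apply: eq_bigr => z _.
  by rewrite subrr expr0n /= addr0 sqr_sqrtr // sqr_ge0.
by apply: eq_bigr => x _; rewrite expr0n /= addr0 sqr_sqrtr // sqr_ge0.
Qed.

Lemma qf_exp r V (w d : X -> R) t : qf r V (fun y => w y + t * d y) =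
  qf r V w + 2 * t * (2^-1 * S2 r (fun y z => (w y - w z) * (d y - d z))
     + \sum_(y <- r) w y * d y * V y) + t ^+ 2 * qf r V d.
Proof.
rewrite /qf.
rewrite (@eq_S2 _ _ (fun y z => ((w y - w z) ^+ 2 + (2 * t) * ((w y - w z) * (d y - d z)))
    + t ^+ 2 * (d y - d z) ^+ 2)); last by move=> y z; ring.
rewrite !S2D !S2Z.
have -> : \sum_(y <- r) (w y + t * d y) ^+ 2 * V y = \sum_(y <- r) w y ^+ 2 * V y +
    2 * t * \sum_(y <- r) w y * d y * V y + t ^+ 2 * \sum_(y <- r) d y ^+ 2 * V y.
  rewrite !mulr_sumr -!big_split; apply: eq_bigr => y _ /=; ring.
ring.
Qed.

Lemma perturb r V (w : X -> R) x0 y0 : uniq r -> x0 \in r -> y0 \in r -> w x0 = 0 ->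
  0 < b x0 y0 -> 0 < w y0 -> (forall y, 0 <= w y) -> qf r V w <= 0 ->
  (forall t, 0 <= qf r V (fun y => w y + t * (y == x0)%:R)) -> False.
Proof.
move=> ur x0r y0r wx0 bp wp wge qw H.
set d := fun y : X => ((y == x0)%:R : R).
set beta := \sum_(z <- r) b x0 z * w z.
have betap : 0 < beta.
  rewrite /beta (bigD1_seq y0 y0r ur) /=.
  apply: (lt_le_trans (mulr_gt0 bp wp)); rewrite lerDl; apply: sumr_ge0 => z _.
  by rewrite mulr_ge0 ?b_ge0.
have Sd : forall F, S2 r (fun y z => F y z * d y) = \sum_(z <- r) b x0 z * F x0 z.
  move=> F; rewrite /S2 (bigD1_seq x0 x0r ur) /= [X in _ + X]big1 ?addr0.
    by apply: eq_bigr => z _; rewrite /d eqxx mulr1.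
  by move=> y yx; rewrite big1 // => z _; rewrite /d (negbTE yx) mulr0 mulr0.
have Bq : 2^-1 * S2 r (fun y z => (w y - w z) * (d y - d z)) + \sum_(y <- r) w y * d y * V y
    = - beta.
  rewrite (@eq_S2 _ _ (fun y z => (w y - w z) * d y + (w z - w y) * d z)); last first.
    by move=> y z; ring.
  rewrite S2D (S2_swap r (fun y z => (w y - w z) * d y)) Sd.
  have Vd : \sum_(y <- r) w y * d y * V y = 0.
    rewrite (bigD1_seq x0 x0r ur) /= big1 ?addr0; first by rewrite wx0 !mul0r.
    by move=> y yx; rewrite /d (negbTE yx) mulr0 mul0r.
  rewrite Vd addr0 wx0.
  have -> : \sum_(z <- r) b x0 z * (0 - w z) = - beta.
    by rewrite /beta -sumrN; apply: eq_bigr => z _; rewrite sub0r mulrN.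
  by field.
set Q := qf r V d.
set t := beta / (`|Q| + 1).
have Qp : 0 < `|Q| + 1 by rewrite ltr_wpDl.
have tp : 0 < t by rewrite divr_gt0.
have := H t; rewrite -/d qf_exp Bq.
have tQ : t ^+ 2 * Q <= t * beta.
  have -> : t * beta = t ^+ 2 * (`|Q| + 1) by rewrite /t; field; rewrite gt_eqF.
  by apply: ler_wpM2l; [exact: sqr_ge0 | apply: le_trans (ler_norm _) _; rewrite lerDl].
have tb : 0 < t * beta by rewrite mulr_gt0.
have -> : 2 * t * - beta = - (2 * (t * beta)) by ring.
have eQ : qf r V (fun y : X => ((y == x0)%:R : R)) = Q by [].
rewrite eQ; move: tQ tb qw; clearbody t beta Q; lra.
Qed.

Lemma boundary (ci : all_components_infinite b) (s : seq X) (P : pred X) x1 :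
  P x1 -> (forall x, P x -> x \in s) -> exists p q, [/\ P p, ~~ P q & 0 < b p q].
Proof.
move=> Px1 Ps.
have [z [cz zs]] : exists z, gconnected b x1 z /\ z \notin s.
  case: (pselect (exists z, gconnected b x1 z /\ z \notin s)) => // H.
  exfalso; apply: (ci x1); apply: (sub_finite_set _ (finite_seq s)) => z cz /=.
  by apply/negPn/negP => zs; apply: H; exists z.
have Pz : ~~ P z by apply: contra zs; exact: Ps.
move: Px1 Pz; elim: cz => [a y ay Pa nPy|y Py nPy|a y c _ IH1 _ IH2 Pa nPc].
- by exists a, y.
- by move: nPy; rewrite Py.
have [Py|nPy] := boolP (P y); first exact: IH2.
exact: IH1.
Qed.

Section Analytic.
Hypotheses (conn : connection Phi) (sa : selfadjoint_endo W).

Lemma Psi_unit y z : adjmx (Psi y z) *m Psi y z = 1%:M.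
Proof.
rewrite /Psi /adjmx -map_trmx trmxK -[X in X *m _]trmxK -trmx_mul.
by case: (conn z y) => -> _ _ _; rewrite trmx1.
Qed.

Lemma WT_adj y : adjmx (W y)^T = (W y)^T.
Proof. by rewrite /adjmx -map_trmx trmxK -[in RHS](sa y) /adjmx trmxK. Qed.
Lemma eigsetT y : eigset (W y)^T = eigset (W y).
Proof.
have AT : (W y)^T = map_mx (@conjc R) (W y).
  by rewrite -[in LHS](sa y) /adjmx trmxK.
rewrite /eigset AT; apply: funext => r /=.
by rewrite -{1}(conjc_real r) (eigenvalue_map (@conjc R)).
Qed.

Definition wn (u : Sec) y := Num.sqrt (nrm2 (u y)).

Lemma wn_sq u y : wn u y ^+ 2 = nrm2 (u y).
Proof. by rewrite sqr_sqrtr // nrm2_ge0. Qed.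
Lemma wn_ge0 u y : 0 <= wn u y. Proof. exact: sqrtr_ge0. Qed.

Lemma vertex_eq u y : hd (u y) (Mt u y) =
  \sum_(z <- nb y) b y z * (nrm2 (u y) - hd (u y) (Psi y z *m u z))
  + hd (u y) ((W y)^T *m u y).
Proof.
rewrite /Mt hdDr hd_sumr; congr (_ + _); apply: eq_bigr => z _.
by rewrite hdZr hdBr.
Qed.

Lemma hdPsi u y z : `|hd (u y) (Psi y z *m u z)| <= wn u y * wn u z.
Proof. by rewrite /wn -(nrm2_unit (u z) (Psi_unit y z)); exact: CS. Qed.

Lemma vertex1 u y : Mt u y = 0 ->
  \sum_(z <- nb y) b y z * (wn u y ^+ 2 - wn u y * wn u z) + Wmin W y * wn u y ^+ 2 <= 0.
Proof.
move=> M0; have := vertex_eq u y; rewrite M0 /hd mulmx0 mxE /= => E.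
rewrite -/(hd _ _) in E.
have [R1 _] := rayleigh (WT_adj y) (u y); rewrite eigsetT in R1.
rewrite wn_sq; apply: le_trans (_ : \sum_(z <- nb y) b y z * (nrm2 (u y) - hd (u y) (Psi y z *m u z))
  + hd (u y) ((W y)^T *m u y) <= 0); last by rewrite -E.
apply: lerD => //; apply: ler_sum => z _; apply: ler_wpM2l; first exact: b_ge0.
by rewrite lerB // (le_trans (ler_norm _) (hdPsi _ _ _)).
Qed.

Lemma vertex2 u y : Mt u y = 0 ->
  0 <= \sum_(z <- nb y) b y z * (wn u y ^+ 2 + wn u y * wn u z) + Wmax W y * wn u y ^+ 2.
Proof.
move=> M0; have := vertex_eq u y; rewrite M0 /hd mulmx0 mxE /= => E.
rewrite -/(hd _ _) in E.
have [_ R2] := rayleigh (WT_adj y) (u y); rewrite eigsetT in R2.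
have H0 : 0 <= \sum_(z <- nb y) b y z * (nrm2 (u y) - hd (u y) (Psi y z *m u z))
  + hd (u y) ((W y)^T *m u y) by rewrite -E.
rewrite wn_sq; apply: le_trans H0 _.
apply: lerD => //; apply: ler_sum => z _; apply: ler_wpM2l; first exact: b_ge0.
rewrite lerD //; apply: le_trans _ (hdPsi u y z).
by rewrite -normrN ler_norm.
Qed.

Lemma wn0 u y : u y = 0 -> wn u y = 0.
Proof. by move=> u0; rewrite /wn u0 /nrm2 /hd mulmx0 mxE sqrtr0. Qed.

Lemma S2_split r (F : X -> X -> R) :
  S2 r F = \sum_(y <- r) \sum_(z <- r) b y z * F y z.
Proof. by []. Qed.

Lemma sum_case1 u s s2 : fsup u s -> uniq s2 -> (forall y, y \in s -> {subset nb y <= s2}) ->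
  (forall y, Mt u y = 0) -> qf s2 (Wmin W) (wn u) <= 0.
Proof.
move=> su us2 nbs Mu; set w := wn u.
have E : forall y, y \in s2 ->
    \sum_(z <- s2) b y z * (w y ^+ 2 - w y * w z) + Wmin W y * w y ^+ 2 <= 0.
  move=> y _; have [ys|ys] := boolP (y \in s).
    rewrite -(seq_widen (nb_uniq y) us2 (nbs y ys)); first exact: vertex1.
    by move=> z zn; rewrite nb0 // mul0r.
  rewrite /w wn0 ?su // big1 ?add0r; first by rewrite expr0n mulr0.
  by move=> z _; rewrite expr0n mul0r subrr mulr0.
have := @sumr_le0 _ _ s2 _ _ E; rewrite -big_seq big_split /= -/(S2 s2 _).
have -> : S2 s2 (fun y z => w y ^+ 2 - w y * w z) =
    S2 s2 (fun y z => w y ^+ 2) - S2 s2 (fun y z => w y * w z).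
  by rewrite S2D S2N.
rewrite qfE; congr (_ <= _); congr (_ + _); apply: eq_bigr => y _; exact: mulrC.
Qed.

Lemma deg_nb y : deg b y = \sum_(z <- nb y) b y z.
Proof.
rewrite /deg (esumT_seq (r := nb y)) //; [exact: b_ge0 | exact: nb_uniq | exact: nb0].
Qed.

Lemma sum_case2 u s s2 : fsup u s -> uniq s2 -> (forall y, y \in s -> {subset nb y <= s2}) ->
  (forall y, Mt u y = 0) -> qf s2 (fun x => - Wmax W x - 2 * deg b x) (wn u) <= 0.
Proof.
move=> su us2 nbs Mu; set w := wn u.
have E : forall y, y \in s2 ->
    0 <= \sum_(z <- s2) b y z * (w y ^+ 2 + w y * w z) + Wmax W y * w y ^+ 2.
  move=> y _; have [ys|ys] := boolP (y \in s).
    rewrite -(seq_widen (nb_uniq y) us2 (nbs y ys)); first exact: vertex2.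
    by move=> z zn; rewrite nb0 // mul0r.
  rewrite /w wn0 ?su // big1 ?add0r; first by rewrite expr0n mulr0.
  by move=> z _; rewrite expr0n mul0r add0r mulr0.
have D : forall y, y \in s2 -> deg b y * w y ^+ 2 = \sum_(z <- s2) b y z * w y ^+ 2.
  move=> y _; rewrite -mulr_suml; have [ys|ys] := boolP (y \in s).
    rewrite deg_nb (seq_widen (nb_uniq y) us2 (nbs y ys)) // => z zn.
    by rewrite nb0.
  by rewrite /w wn0 ?su // expr0n !mulr0.
have := @sumr_ge0 _ _ s2 _ _ E; rewrite -big_seq big_split /= -/(S2 s2 _).
rewrite S2D qfE /=.
have -> : \sum_(y <- s2) w y ^+ 2 * (- Wmax W y - 2 * deg b y) =
    - \sum_(y <- s2) Wmax W y * w y ^+ 2 - 2 * S2 s2 (fun y z => w y ^+ 2).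
  rewrite /S2 mulr_sumr -sumrN -sumrB; apply: eq_big_seq => y ys.
  rewrite -(D y ys); ring.
move=> H; lra.
Qed.

Lemma Mt_inj (ci : all_components_infinite b)
  (hq : qform_nonneg b (Wmin W) \/ qform_nonneg b (fun x => - Wmax W x - 2 * deg b x))
  u : Pf u -> (forall y, Mt u y = 0) -> forall x, u x = 0.
Proof.
move=> [s su] Mu x; apply/eqP/negPn/negP => ux.
have Ps : forall y, u y != 0 -> y \in s.
  by move=> y; apply: contraR => ys; rewrite su.
have [p [q [Pp Pq bpq]]] := boundary ci (P := fun y => u y != 0) ux Ps.
move/negPn/eqP: Pq => uq.
have wq : wn u q = 0 := wn0 uq.
have wp : 0 < wn u p.
  rewrite /wn sqrtr_gt0 lt0r nrm2_ge0 andbT; apply/eqP => /nrm2_eq0 up.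
  by rewrite up eqxx in Pp.
have nbs : forall y, y \in s -> {subset nb y <= ext (q :: s)}.
  by move=> y ys z zn; apply: (ext_nb _ zn); rewrite inE ys orbT.
have qr : q \in ext (q :: s) by apply: ext_l; rewrite inE eqxx.
have pr : p \in ext (q :: s) by apply: ext_l; rewrite inE Ps ?orbT.
have bqp : 0 < b q p by rewrite b_sym.
have h0 : forall t x, x \notin q :: s -> wn u x + t * (x == q)%:R = 0.
  move=> t y; rewrite inE negb_or => /andP[yq ys].
  by rewrite wn0 ?su // (negbTE yq) mulr0 addr0.
case: hq => hq.
- apply: (perturb (ext_uniq _) qr pr wq bqp wp (wn_ge0 u) (sum_case1 su (ext_uniq _) nbs Mu)).
  by move=> t; apply: qform_qf hq (h0 t).
- apply: (perturb (ext_uniq _) qr pr wq bqp wp (wn_ge0 u) (sum_case2 su (ext_uniq _) nbs Mu)).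
  by move=> t; apply: qform_qf hq (h0 t).
Qed.
End Analytic.
End Main.

Theorem theorem2p3 (R : realType) (X : countType) (b : X -> X -> R)
    (n : X -> nat) (Phi : forall x y : X, 'M[R[i]]_(n x, n y))
    (W : forall x : X, 'M[R[i]]_(n x)) :
  weighted_graph b ->
  connection Phi ->
  selfadjoint_endo W ->
  locally_finite b ->
  all_components_infinite b ->
  qform_nonneg b (Wmin W) \/ qform_nonneg b (fun x => - Wmax W x - 2 * deg b x) ->
  forall g : forall x : X, 'cV[R[i]]_(n x),
    exists f : forall x : X, 'cV[R[i]]_(n x),
      forall x : X, magnetic b Phi W f x = g x.
Proof.
move=> wg conn sa lf ci hq g.
exact: (@surj_of_inj R X b n Phi W wg lf g (@Mt_inj R X b n Phi W wg lf conn sa ci hq)).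
Qed.
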